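(* Let $X',X''$ be a disjoint cover of an index set $X$, $\Pi:=\Pi X$, $\Pi':=\Pi X'$, $\Pi'':=\Pi X''$, so $\Pi=\Pi'\times\Pi''$. Let $\mu$ assign to every subset $A$ of $\Pi$, of $\Pi'$ or of $\Pi''$ a subset $\mu(A)\subseteq A$, and define: $B\subseteq A$ is big iff $\mu(A)\subseteq B\subseteq A$. For $\Sigma\subseteq\Pi$ write $\Sigma':=\Sigma\upharpoonright X'$, $\Sigma'':=\Sigma\upharpoonright X''$. Consider the conditions (each universally quantified over all sets of the indicated kinds): (S*1) for $\Sigma'\subseteq\Pi'$, $\Sigma''\subseteq\Pi''$, $\Delta\subseteq\Sigma'\times\Sigma''$: $\Delta\subseteq\Sigma'\times\Sigma''$ is big iff there is $\Gamma'\times\Gamma''\subseteq\Delta$ with $\Gamma'\subseteq\Sigma'$ and $\Gamma''\subseteq\Sigma''$ big; (S*2) for $\Gamma\subseteq\Sigma\subseteq\Pi$: if $\Gamma\subseteq\Sigma$ is big then $\Gamma\upharpoonright X'\subseteq\Sigma\upharpoonright X'$ is big; (S*3) for $A\subseteq\Sigma\subseteq\Pi$: if $A\subseteq\Sigma$ is big then there is a big $B\subseteq\Pi'\times\Sigma''$ with $B\upharpoonright X''\subseteq A\upharpoonright X''$; ($\mu$*1) for $\Sigma'\subseteq\Pi'$, $\Sigma''\subseteq\Pi''$: $\mu(\Sigma'\times\Sigma'')=\mu(\Sigma')\times\mu(\Sigma'')$; ($\mu$*2) for $\Sigma\subseteq\Pi$ and $\Gamma$: if $\mu(\Sigma)\subseteq\Gamma$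 then $\mu(\Sigma\upharpoonright X')\subseteq\Gamma\upharpoonright X'$; ($\mu$*3) for $\Sigma\subseteq\Pi$: $\mu(\Pi'\times\Sigma'')\upharpoonright X''\subseteq\mu(\Sigma)\upharpoonright X''$. Then (S*$i$) is equivalent to ($\mu$*$i$) for $i=1,2,3$.
   Context: $\Pi X$ denotes the product of the value sets over the indices in $X$; for a set $\Sigma$ of sequences and $Y\subseteq X$, $\Sigma\upharpoonright Y$ is the set of restrictions of its elements to $Y$. *)

(* Defs.v *)
From mathcomp Require Import all_boot.
From mathcomp Require Export boolp classical_sets.

Set Implicit Arguments.
Unset Strict Implicit.
Unset Printing Implicit Defensive.

Local Open Scope classical_set_scope.

Definition PiSub (I : Type) (V : I -> Type) (P : I -> Prop) : Type :=
  forall j : {i : I | P i}, V (proj1_sig j).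

Definition restr (I : Type) (V : I -> Type) (P : I -> Prop)
  (f : forall i, V i) : PiSub V P :=
  fun j => f (proj1_sig j).

Definition restrS (I : Type) (V : I -> Type) (P : I -> Prop)
  (S : set (forall i, V i)) : set (PiSub V P) :=
  @restr I V P @` S.

(* Product S' x S'' of S' <= Pi X' and S'' <= Pi X'', viewed as a subset of
   Pi X = Pi X' x Pi X'' (the identification via restriction). *)
Definition prodS (I : Type) (V : I -> Type) (X' X'' : I -> Prop)
  (S' : set (PiSub V X')) (S'' : set (PiSub V X'')) : set (forall i, V i) :=
  [set f | S' (@restr I V X' f) /\ S'' (@restr I V X'' f)].

Definition big (T : Type) (mu : set T -> set T) (A B : set T) : Prop :=
  mu A `<=` B /\ B `<=` A.

Arguments restr {I V} P f _.
Arguments restrS {I V} P S _.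
Arguments prodS {I V X' X''} S' S'' _.
Arguments big {T} mu A B.

(* Main.v *)
Require Import Defs.
From mathcomp Require Import all_boot.
From mathcomp Require Import boolp classical_sets.

Local Open Scope classical_set_scope.

Theorem fact4p4 (I : Type) (V : I -> Type) (X' X'' : I -> Prop)
  (hcover : forall i, X' i \/ X'' i)
  (hdisj : forall i, ~ (X' i /\ X'' i))
  (mu : set (forall i, V i) -> set (forall i, V i))
  (mu' : set (PiSub V X') -> set (PiSub V X'))
  (mu'' : set (PiSub V X'') -> set (PiSub V X''))
  (hmu : forall A, mu A `<=` A)
  (hmu' : forall A, mu' A `<=` A)
  (hmu'' : forall A, mu'' A `<=` A) :
  (* (S*1) <-> (mu*1) *)
  ((forall (S' : set (PiSub V X')) (S'' : set (PiSub V X''))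
       (D : set (forall i, V i)),
      D `<=` prodS S' S'' ->
      (big mu (prodS S' S'') D <->
       exists (G' : set (PiSub V X')) (G'' : set (PiSub V X'')),
         [/\ prodS G' G'' `<=` D, big mu' S' G' & big mu'' S'' G'']))
   <->
   (forall (S' : set (PiSub V X')) (S'' : set (PiSub V X'')),
      mu (prodS S' S'') = prodS (mu' S') (mu'' S'')))
  /\
  (* (S*2) <-> (mu*2) *)
  ((forall G S : set (forall i, V i),
      G `<=` S -> big mu S G -> big mu' (restrS X' S) (restrS X' G))
   <->
   (forall S G : set (forall i, V i),
      mu S `<=` G -> mu' (restrS X' S) `<=` restrS X' G))
  /\
  (* (S*3) <-> (mu*3) *)
  ((forall A S : set (forall i, V i),
      A `<=` S -> big mu S A ->
      exists B : set (forall i, V i),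
        big mu (prodS (@setT (PiSub V X')) (restrS X'' S)) B /\
        restrS X'' B `<=` restrS X'' A)
   <->
   (forall S : set (forall i, V i),
      restrS X'' (mu (prodS (@setT (PiSub V X')) (restrS X'' S))) `<=` restrS X'' (mu S))).
Proof.
split; [|split].
- split.
  + move=> H S' S''; apply/seteqP; split.
    * have HD : prodS (mu' S') (mu'' S'') `<=` prodS S' S''.
        by move=> f [h1 h2]; exact: (conj (hmu' _ _ h1) (hmu'' _ _ h2)).
      have [_ Hb] := H S' S'' _ HD.
      apply: (proj1 (Hb _)).
      by exists (mu' S'), (mu'' S''); split => //; split.
    * have [Hb _] := H S' S'' (mu (prodS S' S'')) (hmu _).
      have [G' [G'' [HG H1 H2]]] := Hb (conj (fun x h => h) (hmu _)).
      move=> f [h1 h2]; apply: HG; split; [apply: (proj1 H1) | apply: (proj1 H2)]; done.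
  + move=> H S' S'' D HD; rewrite /big H; split.
    * move=> [Hm _]; exists (mu' S'), (mu'' S''); split => //; split => //.
    * move=> [G' [G'' [HG [H1 _] [H2 _]]]]; split => //.
      move=> f [h1 h2]; apply: HG; split; [exact: H1|exact: H2].
- split.
  + move=> H S G HG.
    have [Hb _] := H (G `&` S) S (fun x h => proj2 h) (conj (fun x h => conj (HG x h) (hmu _ _ h)) (fun x h => proj2 h)).
    move=> y /Hb [f [hf _] <-]; by exists f.
  + move=> H G S HGS [Hm _]; split; first exact: H.
    move=> y [f hf <-]; exists f => //; exact: HGS.
- split.
  + move=> H S.
    have [B [[HB _] HBA]] := H (mu S) S (hmu S) (conj (fun x h => h) (hmu S)).
    move=> y [f hf <-]; apply: HBA; exists f => //; exact: HB.
  + move=> H A S HAS [Hm _].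
    exists (mu (prodS (@setT (PiSub V X')) (restrS X'' S))); split.
    * split; [by [] | exact: hmu].
    * move=> y /H [f hf <-]; exists f => //; exact: Hm.
Qed.
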